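(* Let $\ell:\mathcal{R}\to\mathbb{R}^{\mathcal{Y}}_+$ be a discrete loss, $L:\mathbb{R}^d\to\mathbb{R}^{\mathcal{Y}}_+$ a polyhedral loss, and $\psi:\mathbb{R}^d\to\mathcal{R}$ a link such that $(L,\psi)$ is consistent for $\ell$. Then there exists $c>0$ such that for all hypotheses $h:\mathcal{X}\to\mathbb{R}^d$ and all data distributions $\mathcal{D}$ on $\mathcal{X}\times\mathcal{Y}$, $R_\ell(\psi\circ h;\mathcal{D})\le c\cdot R_L(h;\mathcal{D})$.
   Context: $\mathcal{Y}$ is a finite label set and $\mathcal{X}$ a feature space; $\mathbb{R}^{\mathcal{Y}}_+$ is the nonnegative orthant. A loss $L:\mathcal{R}\to\mathbb{R}^{\mathcal{Y}}_+$ assigns a loss $L(r)_y$ to report $r$ and label $y$; it is discrete if $\mathcal{R}$ is finite; $L:\mathbb{R}^d\to\mathbb{R}^{\mathcal{Y}}_+$ is polyhedral if each $u\mapsto L(u)_y$ is a pointwise maximum of finitely many affine functions. Regrets: $R_L(h;\mathcal{D})=\mathbb{E}_{(X,Y)\sim\mathcal{D}}L(h(X))_Y-\inf_{h'}\mathbb{E}_{\mathcal{D}}L(h'(X))_Y$ and $R_\ell(g;\mathcal{D})=\mathbb{E}_{\mathcal{D}}\ell(g(X))_Y-\inf_{g'}\mathbb{E}_{\mathcal{D}}\ell(g'(X))_Y$, infima over all measurable $h':\mathcal{X}\to\mathbb{R}^d$, $g':\mathcal{X}\to\mathcal{R}$; hypotheses are measurable. $(L,\psi)$ is consistent for $\ell$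 if for every distribution $\mathcal{D}$ on $\mathcal{X}\times\mathcal{Y}$ and every sequence of hypotheses $h_1,h_2,\dots$ with $R_L(h_i;\mathcal{D})\to0$, we have $R_\ell(\psi\circ h_i;\mathcal{D})\to0$. *)

(* Defs.v *)
From HB Require Import structures.
From mathcomp Require Import all_boot all_order all_algebra.
From mathcomp Require Import all_classical all_reals all_analysis.
Set Implicit Arguments. Unset Strict Implicit. Unset Printing Implicit Defensive.
Import Order.TTheory GRing.Theory Num.Theory.
Local Open Scope classical_set_scope.
Local Open Scope ring_scope.

(* The finite label set Y, realised as {0,...,n} (a nonempty finite set),
   equipped with the discrete sigma-algebra. *)
Definition label (n : nat) : Type := 'I_n.+1.
HB.instance Definition _ n := Finite.on (label n).
HB.instance Definition _ n := isPointed.Build (label n) ord0.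
HB.instance Definition _ n := @isMeasurable.Build default_measure_display
  (label n) discrete_measurable discrete_measurable0
  discrete_measurableC discrete_measurableU.

(* Borel sigma-algebra on R^d (= row vectors 'rV[R]_d), i.e. the sigma-algebra
   generated by the coordinate projections. *)
Definition rV_borel (R : realType) (d : nat) : set (set 'rV[R]_d) :=
  <<s [set C | exists (i : 'I_d) (B : set R),
          measurable B /\ C = (fun u : 'rV[R]_d => u ord0 i) @^-1` B] >>.

Definition meas_rV (dX : measure_display) (X : measurableType dX)
  (R : realType) (d : nat) (h : X -> 'rV[R]_d) : Prop :=
  forall A, rV_borel A -> measurable (h @^-1` A).

Definition meas_fin (dX : measure_display) (X : measurableType dX)
  (Rep : finType) (g : X -> Rep) : Prop :=
  forall r : Rep, measurable (g @^-1` [set r]).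

Definition meas_link (R : realType) (d : nat) (Rep : finType)
  (psi : 'rV[R]_d -> Rep) : Prop :=
  forall r : Rep, rV_borel (psi @^-1` [set r]).

Definition polyhedral (R : realType) (d n : nat) (L : 'rV[R]_d -> label n -> R)
  : Prop :=
  forall y : label n, exists (m : nat) (a : 'I_m.+1 -> 'rV[R]_d) (b : 'I_m.+1 -> R),
    forall u : 'rV[R]_d,
      (forall k, \sum_(i < d) a k ord0 i * u ord0 i + b k <= L u y) /\
      (exists k, L u y = \sum_(i < d) a k ord0 i * u ord0 i + b k).

Local Open Scope ereal_scope.

Definition riskL (dX : measure_display) (X : measurableType dX) (R : realType)
  (d n : nat) (L : 'rV[R]_d -> label n -> R)
  (D : probability (X * label n)%type R) (h : X -> 'rV[R]_d) : \bar R :=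
  \int[D]_p (L (h p.1) p.2)%:E.

Definition regretL (dX : measure_display) (X : measurableType dX) (R : realType)
  (d n : nat) (L : 'rV[R]_d -> label n -> R)
  (D : probability (X * label n)%type R) (h : X -> 'rV[R]_d) : \bar R :=
  riskL L D h - ereal_inf [set riskL L D h' | h' in [set h' | meas_rV h']].

Definition riskl (dX : measure_display) (X : measurableType dX) (R : realType)
  (n : nat) (Rep : finType) (l : Rep -> label n -> R)
  (D : probability (X * label n)%type R) (g : X -> Rep) : \bar R :=
  \int[D]_p (l (g p.1) p.2)%:E.

Definition regretl (dX : measure_display) (X : measurableType dX) (R : realType)
  (n : nat) (Rep : finType) (l : Rep -> label n -> R)
  (D : probability (X * label n)%type R) (g : X -> Rep) : \bar R :=
  riskl l D g - ereal_inf [set riskl l D g' | g' in [set g' | meas_fin g']].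

Definition consistent (dX : measure_display) (X : measurableType dX)
  (R : realType) (d n : nat) (Rep : finType)
  (L : 'rV[R]_d -> label n -> R) (psi : 'rV[R]_d -> Rep)
  (l : Rep -> label n -> R) : Prop :=
  forall (D : probability (X * label n)%type R) (hs : nat -> X -> 'rV[R]_d),
    (forall k, meas_rV (hs k)) ->
    (fun k => regretL L D (hs k)) @ \oo --> 0 ->
    (fun k => regretl l D (psi \o hs k)) @ \oo --> 0.

(* Main.v *)
Require Import Defs.
From HB Require Import structures.
From mathcomp Require Import all_boot all_order all_algebra.
From mathcomp Require Import all_classical all_reals all_analysis.
From mathcomp Require Import measurable_realfun.
From mathcomp Require Import ring lra.
Import Order.TTheory GRing.Theory Num.Theory.
Local Open Scope classical_set_scope.
Local Open Scope ring_scope.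
Set Implicit Arguments. Unset Strict Implicit. Unset Printing Implicit Defensive.

Section FM.
Variable R : realType.
Definition cstr := ((nat -> R) * R)%type.
Definition lhs m (c : cstr) (x : nat -> R) := \sum_(i < m) c.1 i * x i.
Definition satc m (c : cstr) x := lhs m c x <= c.2.
Definition sat m (cs : seq cstr) x := all (fun c => satc m c x) cs.

Definition comb m (cp cn : cstr) : cstr :=
  ((fun i => - cn.1 m * cp.1 i + cp.1 m * cn.1 i), - cn.1 m * cp.2 + cp.1 m * cn.2).
Definition posc m (cs : seq cstr) := [seq c <- cs | 0 < c.1 m].
Definition negc m (cs : seq cstr) := [seq c <- cs | c.1 m < 0].
Definition elim1 m cs :=
  [seq c <- cs | c.1 m == 0] ++
  [seq comb m cp cn | cp <- posc m cs, cn <- negc m cs].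
Definition bnd m (c : cstr) x := (c.2 - lhs m c x) / c.1 m.
Definition fmax (f : cstr -> R) (s : seq cstr) (d : R) :=
  foldr (fun c acc => Num.max (f c) acc) d s.
Definition fmin (f : cstr -> R) (s : seq cstr) (d : R) :=
  foldr (fun c acc => Num.min (f c) acc) d s.
Definition sel1 m cs x : R :=
  match negc m cs with
  | cn :: _ => fmax (fun c => bnd m c x) (negc m cs) (bnd m cn x)
  | [::] => match posc m cs with
            | cp :: _ => fmin (fun c => bnd m c x) (posc m cs) (bnd m cp x)
            | [::] => 0 end
  end.
Definition upd (x : nat -> R) m t := fun i => if i == m then t else x i.

Lemma fmax_ge f s d c : c \in s -> f c <= fmax f s d.
Proof.
elim: s => //= c' s IH; rewrite in_cons => /orP[/eqP->|/IH H].
  by rewrite le_max lexx.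
by rewrite le_max H orbT.
Qed.
Lemma fmax_in f s d : fmax f s d = d \/ exists2 c, c \in s & fmax f s d = f c.
Proof.
elim: s => /=; first by left.
move=> c s [->|[c' Hc' ->]].
  by case: (leP (f c) d) => _; [left|right; exists c => //; rewrite mem_head].
by case: (leP (f c) (f c')) => _; right; [exists c'; rewrite // in_cons Hc' orbT|exists c; rewrite ?mem_head].
Qed.
Lemma fmin_le f s d c : c \in s -> fmin f s d <= f c.
Proof.
elim: s => //= c' s IH; rewrite in_cons => /orP[/eqP->|/IH H].
  by rewrite ge_min lexx.
by rewrite ge_min H orbT.
Qed.

Lemma lhsS m c x : lhs m.+1 c x = lhs m c x + c.1 m * x m.
Proof. by rewrite /lhs big_ord_recr. Qed.
Lemma lhs_ext m c x y : (forall i, (i < m)%N -> x i = y i) -> lhs m c x = lhs m c y.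
Proof. by move=> H; apply: eq_bigr => i _; rewrite H. Qed.
Lemma sat_ext m cs x y : (forall i, (i < m)%N -> x i = y i) -> sat m cs x = sat m cs y.
Proof. by move=> H; apply: eq_all => c; rewrite /satc (lhs_ext _ H). Qed.
Lemma lhs_comb m cp cn x :
  lhs m (comb m cp cn) x = - cn.1 m * lhs m cp x + cp.1 m * lhs m cn x.
Proof.
rewrite /lhs /= !mulr_sumr -big_split /=; apply: eq_bigr => i _.
by rewrite mulrDl !mulrA.
Qed.

Lemma satcsP m cs x : reflect (forall c, c \in cs -> satc m c x) (sat m cs x).
Proof. exact: allP. Qed.

Lemma elim1_sound m cs x : sat m.+1 cs x -> sat m (elim1 m cs) x.
Proof.
move/satcsP=> H; apply/satcsP => c; rewrite mem_cat => /orP[|].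
  rewrite mem_filter => /andP[/eqP c0 cin]; have := H _ cin.
  by rewrite /satc lhsS c0 mul0r addr0.
case/allpairsP => -[cp cn] /= [cpin cnin ->].
move: cpin cnin; rewrite !mem_filter => /andP[cp0 cpin] /andP[cn0 cnin].
have := H _ cpin; have := H _ cnin; rewrite /satc !lhsS => hn hp.
rewrite lhs_comb /=.
have a : 0 <= - cn.1 m by rewrite oppr_ge0 ltW.
have b : 0 <= cp.1 m by rewrite ltW.
have e1 := ler_wpM2l a hp; have e2 := ler_wpM2l b hn.
have := lerD e1 e2; apply: le_trans; rewrite le_eqVlt; apply/orP; left; apply/eqP; ring.
Qed.
Lemma bnd_comb m cp cn x : 0 < cp.1 m -> cn.1 m < 0 ->
  satc m (comb m cp cn) x -> bnd m cn x <= bnd m cp x.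
Proof.
rewrite /satc lhs_comb /bnd /= => ha hb hc.
set u := (cp.2 - lhs m cp x) / cp.1 m.
have hu : u * cp.1 m = cp.2 - lhs m cp x by rewrite /u divfK // gt_eqF.
rewrite ler_ndivrMr //.
have E1 : cp.1 m * (u * cn.1 m - (cn.2 - lhs m cn x)) = (u * cp.1 m) * cn.1 m - cp.1 m * (cn.2 - lhs m cn x) by ring.
have : cp.1 m * (u * cn.1 m - (cn.2 - lhs m cn x)) <= 0.
  rewrite E1 hu; nra.
rewrite pmulr_rle0 // subr_le0 //.
Qed.
Lemma lhs_upd m c x t : lhs m c (upd x m t) = lhs m c x.
Proof. by apply: lhs_ext => i Hi; rewrite /upd (ltn_eqF Hi). Qed.
Lemma satc_upd m c x t :
  satc m.+1 c (upd x m t) = (lhs m c x + c.1 m * t <= c.2).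
Proof. by rewrite /satc lhsS lhs_upd /upd eqxx. Qed.

Lemma satc_pos m c x t : 0 < c.1 m ->
  (lhs m c x + c.1 m * t <= c.2) = (t <= bnd m c x).
Proof. by move=> h; rewrite /bnd ler_pdivlMr // mulrC lerBrDl. Qed.
Lemma satc_neg m c x t : c.1 m < 0 ->
  (lhs m c x + c.1 m * t <= c.2) = (bnd m c x <= t).
Proof. by move=> h; rewrite /bnd ler_ndivrMr // mulrC lerBrDl. Qed.

Lemma elim1_complete m cs x : sat m (elim1 m cs) x ->
  sat m.+1 cs (upd x m (sel1 m cs x)).
Proof.
move/satcsP=> H.
have HZ c : c \in cs -> c.1 m = 0 -> satc m c x.
  by move=> cin c0; apply: H; rewrite mem_cat mem_filter c0 eqxx cin.
have HPN cp cn : cp \in cs -> cn \in cs -> 0 < cp.1 m -> cn.1 m < 0 ->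
    bnd m cn x <= bnd m cp x.
  move=> cpin cnin hp hn; apply: bnd_comb => //; apply: H.
  rewrite mem_cat; apply/orP; right; apply/allpairsP; exists (cp, cn) => /=.
  by rewrite !mem_filter hp hn cpin cnin.
have Ht : (forall c, c \in cs -> 0 < c.1 m -> sel1 m cs x <= bnd m c x) /\
          (forall c, c \in cs -> c.1 m < 0 -> bnd m c x <= sel1 m cs x).
  rewrite /sel1; case En: (negc m cs) => [|cn s].
    have nN c : c \in cs -> c.1 m < 0 -> False.
      move=> cin hc; have : c \in negc m cs by rewrite mem_filter hc cin.
      by rewrite En.
    split; last by move=> c cin hc; case: (nN c cin hc).
    case Ep: (posc m cs) => [|cp s'] c cin hc.
      have : c \in posc m cs by rewrite mem_filter hc cin.
      by rewrite Ep in_nil.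
    rewrite -Ep; apply: fmin_le; by rewrite mem_filter hc cin.
  rewrite -En; split => c cin hc; last first.
    by apply: fmax_ge; rewrite mem_filter hc cin.
  have [->|[c' c'in ->]] := fmax_in (fun c => bnd m c x) (negc m cs) (bnd m cn x).
  - have : cn \in negc m cs by rewrite En mem_head.
    rewrite mem_filter => /andP[hcn cnin].
    exact: HPN.
  - move: c'in; rewrite mem_filter => /andP[hc' c'in].
    exact: HPN.
case: Ht => Hp Hn.
apply/satcsP => c cin; rewrite satc_upd.
case: (ltgtP (c.1 m) 0) => hc.
- by rewrite satc_neg // Hn.
- by rewrite satc_pos // Hp.
- by have := HZ c cin hc; rewrite /satc hc mul0r addr0.
Qed.
Fixpoint elimk m k cs := match k with 0 => cs | k'.+1 => elimk m k' (elim1 (m + k') cs) end.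
Fixpoint selk m k cs x := match k with
  | 0 => x
  | k'.+1 => let x' := selk m k' (elim1 (m + k') cs) x in
             upd x' (m + k') (sel1 (m + k') cs x') end.

Lemma elimk_sound m k cs x : sat (m + k) cs x -> sat m (elimk m k cs) x.
Proof.
elim: k cs => [|k IH] cs /=; first by rewrite addn0.
by rewrite addnS => H; apply: IH; apply: elim1_sound.
Qed.

Lemma selk_agree m k cs x i : (i < m)%N -> selk m k cs x i = x i.
Proof.
elim: k cs => [|k IH] cs //= Hi.
rewrite /upd; have -> : (i == m + k)%N = false.
  by apply/negbTE; rewrite neq_ltn (leq_trans Hi) // leq_addr.
exact: IH.
Qed.

Lemma elimk_complete m k cs x : sat m (elimk m k cs) x -> sat (m + k) cs (selk m k cs x).
Proof.
elim: k cs => [|k IH] cs /=; first by rewrite addn0.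
by move=> H; rewrite addnS; apply: elim1_complete; apply: IH.
Qed.

Section meas.
Context (dX : measure_display) (X : measurableType dX).
Definition cmeas (F : X -> nat -> R) := forall i, measurable_fun setT (fun t => F t i).

Lemma meas_lhs F m c : cmeas F -> measurable_fun setT (fun t => lhs m c (F t)).
Proof.
move=> HF; rewrite /lhs; apply: measurable_sum => i.
by apply: measurable_funM => //; apply: HF.
Qed.
Lemma meas_bnd F m c : cmeas F -> measurable_fun setT (fun t => bnd m c (F t)).
Proof.
move=> HF; rewrite /bnd; apply: measurable_funM => //.
by apply: measurable_funB => //; apply: meas_lhs.
Qed.
Lemma meas_fmax (f : cstr -> X -> R) s (d : X -> R) :
  (forall c, measurable_fun setT (f c)) -> measurable_fun setT d ->
  measurable_fun setT (fun t => fmax (f ^~ t) s (d t)).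
Proof.
move=> Hf Hd; elim: s => //= c s IH.
exact: (measurable_maxr (Hf c) IH).
Qed.
Lemma meas_fmin (f : cstr -> X -> R) s (d : X -> R) :
  (forall c, measurable_fun setT (f c)) -> measurable_fun setT d ->
  measurable_fun setT (fun t => fmin (f ^~ t) s (d t)).
Proof.
move=> Hf Hd; elim: s => //= c s IH.
exact: (measurable_minr (Hf c) IH).
Qed.
Lemma meas_sel1 F m cs : cmeas F -> measurable_fun setT (fun t => sel1 m cs (F t)).
Proof.
move=> HF; rewrite /sel1; case: (negc m cs) => [|cn s].
  case: (posc m cs) => [|cp s']; first exact: measurable_cst.
  apply: (meas_fmin (f := fun c t => bnd m c (F t))) => *; exact: meas_bnd.
apply: (meas_fmax (f := fun c t => bnd m c (F t))) => *; exact: meas_bnd.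
Qed.
Lemma meas_upd F m G : cmeas F -> measurable_fun setT G -> cmeas (fun t => upd (F t) m (G t)).
Proof. by move=> HF HG i; rewrite /upd; case: eqP => _. Qed.
Lemma meas_selk F m k cs : cmeas F -> cmeas (fun t => selk m k cs (F t)).
Proof.
move=> HF; elim: k cs => [|k IH] cs //=.
apply: meas_upd; first exact: IH.
exact: meas_sel1.
Qed.
End meas.
End FM.

Section P2.
Context (R : realType) (d n : nat).
Definition aff (q : 'rV[R]_d * R) (u : 'rV[R]_d) := \sum_(i < d) q.1 ord0 i * u ord0 i + q.2.

Lemma pieces_exist (L : 'rV[R]_d -> label n -> R) : polyhedral L ->
  exists pc : label n -> seq ('rV[R]_d * R),
    (forall y u q, q \in pc y -> aff q u <= L u y) /\
    (forall y u, exists2 q, q \in pc y & L u y = aff q u).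
Proof.
move=> HL.
have : forall y, exists s : seq ('rV[R]_d * R),
    (forall u q, q \in s -> aff q u <= L u y) /\
    (forall u, exists2 q, q \in s & L u y = aff q u).
  move=> y; have [m [a [b H]]] := HL y.
  exists [seq (a k, b k) | k <- enum 'I_m.+1]; split.
    move=> u q /mapP [k _ ->]; have [H1 _] := H u; exact: H1.
  move=> u; have [_ [k Hk]] := H u; exists (a k, b k) => //.
  by apply/mapP; exists k; rewrite ?mem_enum.
case/choice => pc Hpc; exists pc; split => y; by case: (Hpc y).
Qed.

Definition rvn (a : 'rV[R]_d) (j : nat) : R :=
  if (insub j : option 'I_d) is Some i then a ord0 i else 0.
Definition lz (f : label n -> R) (j : nat) : R :=
  if (insub j : option 'I_n.+1) is Some y then f y else 0.
Lemma rvn_ord a (i : 'I_d) : rvn a i = a ord0 i.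
Proof. by rewrite /rvn valK. Qed.
Lemma lz_ord f (y : 'I_n.+1) : lz f y = f y.
Proof. by rewrite /lz valK. Qed.

Lemma lhs_lz c f : lhs n.+1 c (lz f) = \sum_(y : label n) c.1 y * f y.
Proof. by apply: eq_bigr => i _; rewrite lz_ord. Qed.

Definition cof (y : label n) (q : 'rV[R]_d * R) : cstr R :=
  ((fun j => if (j < n.+1)%N then (if j == val y then -1 else 0) else rvn q.1 (j - n.+1)), - q.2).

Definition vpart (x : nat -> R) : 'rV[R]_d := \row_(i < d) x (n.+1 + i)%N.

Lemma lhs_cof y q x : lhs (n.+1 + d)%N (cof y q) x = - x y + (aff q (vpart x) - q.2).
Proof.
rewrite /lhs big_split_ord /= /aff addrK; congr (_ + _).
  rewrite (bigD1 y) //= ltn_ord eqxx mulN1r big1 ?addr0 // => i /negbTE Hi.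
  by rewrite ltn_ord /= (_ : (i == y :> nat) = false) ?mul0r //.
apply: eq_bigr => i _; rewrite ltnNge leq_addr /= addKn rvn_ord mxE //.
Qed.

Lemma satc_cof y q x : satc (n.+1 + d)%N (cof y q) x = (aff q (vpart x) <= x y).
Proof.
by rewrite /satc lhs_cof /=; apply/idP/idP => H; lra.
Qed.
Section withL.
Context (L : 'rV[R]_d -> label n -> R) (pc : label n -> seq ('rV[R]_d * R)).
Context (Hpc1 : forall y u q, q \in pc y -> aff q u <= L u y).
Context (Hpc2 : forall y u, exists2 q, q \in pc y & L u y = aff q u).

Definition cs0 := flatten [seq [seq cof y q | q <- pc y] | y <- enum 'I_n.+1].
Definition fin := elimk n.+1 d cs0.
Definition vsel (z : nat -> R) : 'rV[R]_d := vpart (selk n.+1 d cs0 z).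
Definition jn (z : label n -> R) (v : 'rV[R]_d) : nat -> R :=
  fun j => if (j < n.+1)%N then lz z j else rvn v (j - n.+1).

Lemma cs0P c : c \in cs0 -> exists y, exists2 q, q \in pc y & c = cof y q.
Proof.
case/flatten_mapP => y _ /mapP [q qin ->]; by exists y, q.
Qed.
Lemma cof_in y q : q \in pc y -> cof y q \in cs0.
Proof.
move=> qin; apply/flatten_mapP; exists y; first by rewrite mem_enum.
by apply/mapP; exists q.
Qed.

Lemma T1 u (z : label n -> R) : (forall y, L u y <= z y) -> sat n.+1 fin (lz z).
Proof.
move=> Hz.
have : sat (n.+1 + d)%N cs0 (jn z u).
  apply/satcsP => c /cs0P [y [q qin ->]]; rewrite satc_cof.
  have -> : vpart (jn z u) = u.
    by apply/rowP => i; rewrite mxE /jn ltnNge leq_addr /= addKn rvn_ord.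
  rewrite /jn ltn_ord lz_ord; apply: le_trans (Hz y); exact: Hpc1.
move/elimk_sound; rewrite (@sat_ext _ _ _ _ (lz z)) // => i Hi.
by rewrite /jn Hi.
Qed.

Lemma T2 (z : label n -> R) : sat n.+1 fin (lz z) -> forall y, L (vsel (lz z)) y <= z y.
Proof.
move/elimk_complete => H y.
have [q qin ->] := Hpc2 y (vsel (lz z)).
have /satcsP HH := H; have := HH _ (cof_in qin); rewrite satc_cof /vsel.
by rewrite selk_agree ?ltn_ord // lz_ord.
Qed.

Lemma T3 c : c \in fin -> forall y : label n, c.1 y <= 0.
Proof.
move=> cin y; rewrite leNgt; apply/negP => cy.
set S0 := \sum_(y' : label n) c.1 y' * L 0 y'.
set t := (`|c.2 - S0| + 1) / c.1 y.
have t0 : 0 <= t by rewrite divr_ge0 // ltW // ltr_pwDr // ltr01.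
pose z := fun y' : label n => L 0 y' + (if y' == y then t else 0).
have Hz0 : forall y', L 0 y' <= z y' by move=> y'; rewrite /z; case: eqP => _; lra.
have /satcsP HH := T1 Hz0.
have := HH _ cin.
  rewrite /satc lhs_lz.
  have -> : \sum_(y' : label n) c.1 y' * z y' = S0 + c.1 y * t.
    rewrite /z /S0 (eq_bigr (fun y' : label n => c.1 y' * L 0 y' + c.1 y' * (if y' == y then t else 0))); last by move=> *; rewrite mulrDr.
    rewrite big_split /=; congr (_ + _).
    rewrite (bigD1 y) //= eqxx big1 ?addr0 // => i /negbTE ->; by rewrite mulr0.
  have -> : c.1 y * t = `|c.2 - S0| + 1 by rewrite /t mulrC divfK // gt_eqF.
have := ler_norm (c.2 - S0); lra.
Qed.
End withL.
End P2.

Section P3.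
Context (dX : measure_display) (X : measurableType dX) (R : realType) (d n : nat).

Lemma meas_rV_coord (h : X -> 'rV[R]_d) : meas_rV h ->
  forall i, measurable_fun setT (fun x => h x ord0 i).
Proof.
move=> Hh i _ B mB; rewrite setTI.
apply: (Hh ((fun u : 'rV[R]_d => u ord0 i) @^-1` B)).
apply: sub_gen_smallest; by exists i, B.
Qed.

Lemma coord_meas_rV (h : X -> 'rV[R]_d) :
  (forall i, measurable_fun setT (fun x => h x ord0 i)) -> meas_rV h.
Proof.
move=> Hh A HA.
have : [set A | measurable (h @^-1` A)] A; last by [].
apply: (smallest_sub _ _ HA).
  split.
  - by rewrite /= preimage_set0; exact: measurable0.
  - move=> B /= mB; rewrite setTD preimage_setC; exact: measurableC.
  - move=> F /= mF; rewrite preimage_bigcup; exact: bigcup_measurable.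
move=> C [i [B [mB ->]]] /=.
have := Hh i measurableT B mB; by rewrite setTI.
Qed.

Lemma meas_rV_cst (u : 'rV[R]_d) : meas_rV (fun _ : X => u).
Proof.
by apply: coord_meas_rV => i; exact: measurable_cst.
Qed.

Lemma meas_fin_cst (Rep : finType) (r : Rep) : meas_fin (fun _ : X => r).
Proof.
move=> r'; case: (eqVneq r r') => [->|ne].
  have -> : (fun _ : X => r') @^-1` [set r'] = setT by apply/seteqP; split.
  exact: measurableT.
have -> : (fun _ : X => r) @^-1` [set r'] = set0.
  by apply/seteqP; split => // x /= E; move: ne; rewrite E eqxx.
exact: measurable0.
Qed.

Lemma meas_fin_link (Rep : finType) (psi : 'rV[R]_d -> Rep) (h : X -> 'rV[R]_d) :
  meas_rV h -> meas_link psi -> meas_fin (psi \o h).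
Proof. by move=> Hh Hp r; exact: (Hh _ (Hp r)). Qed.

Lemma meas_fin_fun (Rep : finType) (g : X -> Rep) (phi : Rep -> R) :
  meas_fin g -> measurable_fun setT (fun x => phi (g x)).
Proof.
move=> Hg.
have -> : (fun x => phi (g x)) = (fun x => \sum_(r : Rep) phi r * \1_(g @^-1` [set r]) x).
  apply/funext => x; rewrite (bigD1 (g x)) //= indicE mem_set // mulr1 big1 ?addr0 //.
  move=> r /negbTE ne; rewrite indicE memNset ?mulr0 //= => E.
  by move: ne; rewrite E eqxx.
apply: measurable_sum => r; apply: measurable_funM => //.
Qed.

Lemma meas_fin_pair (R1 R2 : finType) (g1 : X -> R1) (g2 : X -> R2) :
  meas_fin g1 -> meas_fin g2 -> meas_fin (fun x => (g1 x, g2 x)).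
Proof.
move=> H1 H2 [a b].
rewrite (_ : _ @^-1` _ = g1 @^-1` [set a] `&` g2 @^-1` [set b]).
  exact: measurableI.
apply/seteqP; split => x /=; first by case=> -> ->.
by case=> -> ->.
Qed.

Lemma meas_label (f : label n -> R) : measurable_fun setT f.
Proof. by move=> _ B _. Qed.

Lemma meas_prod (F : X -> label n -> R) :
  (forall y, measurable_fun setT (fun x => F x y)) ->
  measurable_fun setT (fun p : X * label n => F p.1 p.2).
Proof.
move=> HF.
have -> : (fun p : X * label n => F p.1 p.2) =
    (fun p => \sum_(y : label n) F p.1 y * (p.2 == y)%:R).
  apply/funext => p; rewrite (bigD1 p.2) //= eqxx mulr1 big1 ?addr0 //.
  by move=> y /negbTE ne; rewrite eq_sym ne mulr0.
apply: measurable_sum => y; apply: measurable_funM => //.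
  exact: (measurableT_comp (HF y) measurable_fst).
exact: (measurableT_comp (meas_label (fun k => (k == y)%:R)) measurable_snd).
Qed.
End P3.

Section Dp.
Context (dX : measure_display) (X : measurableType dX) (R : realType) (n : nat).
Context (x0 : X) (p : label n -> R) (p0 : forall y, 0 <= p y) (p1 : \sum_y p y = 1).

Definition Dp_ : set (X * label n) -> \bar R := let _ := p1 in
  msum (fun k => mscale (NngNum (p0 (inord k))) (@dirac _ (X * label n)%type (x0, inord k) R)) n.+1.
Definition Dp := Dp_.
HB.instance Definition _ := Measure.on Dp.
Lemma Dp_E A : Dp A = (\sum_(k < n.+1) (p (inord k))%:E * \d_((x0, inord k) : X * label n) A)%E.
Proof. by []. Qed.
Let Dp_setT : Dp setT = 1%E.
Proof.
rewrite Dp_E; under eq_bigr do rewrite diracE mem_set // mule1.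
rewrite sumEFin -p1; congr (_%:E).
by apply: eq_bigr => i _; rewrite inord_val.
Qed.
HB.instance Definition _ := Measure_isProbability.Build _ _ _ Dp Dp_setT.

Lemma integral_Dp (f : X * label n -> \bar R) : measurable_fun setT f ->
  (forall q, 0 <= f q)%E ->
  (\int[Dp]_q f q = \sum_(y : label n) (p y)%:E * f (x0, y))%E.
Proof.
move=> mf f0; rewrite /Dp /Dp_ ge0_integral_measure_sum //.
apply: eq_bigr => i _; rewrite ge0_integral_mscale // integral_dirac //.
by rewrite diracE mem_set // mul1e /= inord_val.
Qed.
End Dp.

Section gfold.
Context (R : realType) (T : eqType) (f : T -> R).
Definition pmaxf (s : seq T) (d : R) := foldr (fun c acc => Num.max (f c) acc) d s.
Lemma pmaxf_ge s d c : c \in s -> f c <= pmaxf s d.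
Proof.
elim: s => //= c' s IH; rewrite in_cons => /orP[/eqP->|/IH H].
  by rewrite le_max lexx.
by rewrite le_max H orbT.
Qed.
Lemma pmaxf_le s d B : (forall c, c \in s -> f c <= B) -> d <= B -> pmaxf s d <= B.
Proof.
elim: s => //= c s IH H dB; rewrite ge_max H ?mem_head //=.
by apply: IH => // c' c'in; apply: H; rewrite in_cons c'in orbT.
Qed.
End gfold.

Section P5.
Context (dX : measure_display) (X : measurableType dX) (R : realType) (d n : nat).
Context (L : 'rV[R]_d -> label n -> R) (pc : label n -> seq ('rV[R]_d * R)).
Context (Hpc1 : forall y u q, q \in pc y -> aff q u <= L u y).
Context (Hpc2 : forall y u, exists2 q, q \in pc y & L u y = aff q u).

Lemma L_fold u y : L u y = pmaxf (fun q => aff q u) (pc y) (aff (head (0, 0) (pc y)) u).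
Proof.
have [q qin Eq] := Hpc2 y u.
apply/le_anti/andP; split.
  rewrite Eq; exact: (pmaxf_ge (fun q => aff q u) _ qin).
apply: pmaxf_le => [c cin|]; first exact: Hpc1.
apply: Hpc1; case: (pc y) qin => //= *; exact: mem_head.
Qed.

Lemma meas_aff (h : X -> 'rV[R]_d) q : meas_rV h -> measurable_fun setT (fun x => aff q (h x)).
Proof.
move=> Hh; rewrite /aff; apply: measurable_funD => //.
apply: measurable_sum => i; apply: measurable_funM => //.
exact: meas_rV_coord.
Qed.

Lemma meas_Lh (h : X -> 'rV[R]_d) y : meas_rV h -> measurable_fun setT (fun x => L (h x) y).
Proof.
move=> Hh; rewrite (_ : (fun x => L (h x) y) = fun x => pmaxf (fun q => aff q (h x)) (pc y) (aff (head (0, 0) (pc y)) (h x))); last first.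
  by apply/funext => x; rewrite L_fold.
move: (head (0, 0) (pc y)) => q0.
elim: (pc y) => /= [|c s IH]; first exact: (meas_aff _ Hh).
by apply: measurable_maxr => //; exact: (meas_aff _ Hh).
Qed.

Lemma meas_riskL_f (h : X -> 'rV[R]_d) : meas_rV h ->
  measurable_fun setT (fun q : X * label n => (L (h q.1) q.2)%:E).
Proof.
move=> Hh; apply/measurable_EFinP.
apply: (meas_prod (F := fun x y => L (h x) y)) => y; exact: meas_Lh.
Qed.

Lemma meas_riskl_f (Rep : finType) (l : Rep -> label n -> R) (g : X -> Rep) : meas_fin g ->
  measurable_fun setT (fun q : X * label n => (l (g q.1) q.2)%:E).
Proof.
move=> Hg; apply/measurable_EFinP.
apply: (meas_prod (F := fun x y => l (g x) y)) => y.
exact: (@meas_fin_fun _ _ _ _ g (fun r => l r y) Hg).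
Qed.
End P5.

Lemma ereal_bnd (R : realType) (x : \bar R) a b : (a%:E <= x)%E -> (x <= b%:E)%E -> exists r, x = r%:E.
Proof. by case: x => [r| |] //= _ _; exists r. Qed.

Section P6.
Context (dX : measure_display) (X : measurableType dX) (R : realType) (d n : nat).
Context (Rep : finType) (l : Rep -> label n -> R) (L : 'rV[R]_d -> label n -> R).
Context (psi : 'rV[R]_d -> Rep).
Context (hl0 : forall r y, 0 <= l r y) (hL0 : forall u y, 0 <= L u y).
Context (pc : label n -> seq ('rV[R]_d * R)).
Context (Hpc1 : forall y u q, q \in pc y -> aff q u <= L u y).
Context (Hpc2 : forall y u, exists2 q, q \in pc y & L u y = aff q u).
Context (x0 : X) (p : label n -> R) (p0 : forall y, 0 <= p y) (p1 : \sum_y p y = 1).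

Lemma riskL_Dp h : meas_rV h ->
  riskL L (Dp x0 p0 p1) h = (\sum_y p y * L (h x0) y)%:E.
Proof.
move=> Hh; rewrite /riskL integral_Dp //.
- by rewrite -sumEFin; apply: eq_bigr => y _; rewrite EFinM.
- exact: (meas_riskL_f Hpc1 Hpc2).
- by move=> q; rewrite lee_fin.
Qed.

Lemma riskl_Dp g : meas_fin g ->
  riskl l (Dp x0 p0 p1) g = (\sum_y p y * l (g x0) y)%:E.
Proof.
move=> Hg; rewrite /riskl integral_Dp //.
- by rewrite -sumEFin; apply: eq_bigr => y _; rewrite EFinM.
- exact: (meas_riskl_f l Hg).
- by move=> q; rewrite lee_fin.
Qed.

Lemma calib : consistent X L psi l ->
  forall r0 r, 0 < \sum_y p y * (l r0 y - l r y) ->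
  forall b, (forall u, b <= \sum_y p y * L u y) ->
  exists2 del, 0 < del & forall u, psi u = r0 -> b + del <= \sum_y p y * L u y.
Proof.
move=> cons r0 r hpos b hb.
apply: contrapT => H.
have Hk : forall k : nat, exists u, psi u = r0 /\ \sum_y p y * L u y < b + k.+1%:R^-1.
  move=> k; apply: contrapT => Hn; apply: H; exists (k.+1%:R^-1) => // u pu.
  rewrite leNgt; apply/negP => lt; apply: Hn; by exists u.
have [uk Huk] := choice Hk.
pose hs k := fun _ : X => uk k.
have mhs k : meas_rV (hs k) := meas_rV_cst _ _.
have ILge : (b%:E <= ereal_inf [set riskL L (Dp x0 p0 p1) h' | h' in [set h' | meas_rV h']])%E.
  apply: le_ereal_inf_tmp => _ [h' /= mh' <-]; rewrite riskL_Dp // lee_fin; exact: hb.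
have ILle k : (ereal_inf [set riskL L (Dp x0 p0 p1) h' | h' in [set h' | meas_rV h']] <= (\sum_y p y * L (uk k) y)%:E)%E.
  apply: ereal_inf_lbound; exists (hs k); [exact: mhs|by rewrite riskL_Dp].
have [i Ei] := ereal_bnd ILge (ILle 0%N).
have ib : b <= i by rewrite -lee_fin -Ei.
have Hcv : (fun k => regretL L (Dp x0 p0 p1) (hs k)) @ \oo --> 0%E.
  apply: (@squeeze_cvge _ _ _ _ (cst 0%E) _ (EFin \o harmonic)); last 2 first.
  - exact: cvg_cst.
  - exact: cvge_harmonic.
  apply: nearW => k; rewrite /regretL riskL_Dp // Ei /= -EFinB !lee_fin.
  have := ILle k; rewrite Ei lee_fin => h1.
  have [_ h2] := Huk k.
  apply/andP; split; first by rewrite subr_ge0.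
  rewrite lerBlDr (le_trans (ltW h2)) // addrC; apply: lerD => //.
have := cons (Dp x0 p0 p1) hs mhs Hcv.
have -> : (fun k => regretl l (Dp x0 p0 p1) (psi \o hs k)) = (fun _ => regretl l (Dp x0 p0 p1) (fun _ => r0)).
  apply/funext => k; congr (regretl l (Dp x0 p0 p1) _); apply/funext => x /=.
  by have [-> _] := Huk k.
move=> Hc; have E0 := @cvg_unique _ (@ereal_hausdorff R) _ (fmap_proper_filter _ _) _ _ Hc (cvg_cst _).
have Ilge : (0%:E <= ereal_inf [set riskl l (Dp x0 p0 p1) g | g in [set g | meas_fin g]])%E.
  apply: le_ereal_inf_tmp => _ [g /= mg <-]; rewrite riskl_Dp // lee_fin.
  by apply: sumr_ge0 => y _; apply: mulr_ge0.
have Ille : (ereal_inf [set riskl l (Dp x0 p0 p1) g | g in [set g | meas_fin g]] <= (\sum_y p y * l r y)%:E)%E.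
  apply: ereal_inf_lbound; exists (fun _ => r); first exact: meas_fin_cst.
  by rewrite riskl_Dp //; exact: meas_fin_cst.
have [j Ej] := ereal_bnd Ilge Ille.
move: E0; rewrite /regretl riskl_Dp; last exact: meas_fin_cst.
move=> /(_ eventually_filter eventually_filter).
rewrite Ej -EFinB => -[E1].
have hsum : \sum_y p y * (l r0 y - l r y) = \sum_y p y * l r0 y - \sum_y p y * l r y.
  by rewrite -sumrB; apply: eq_bigr => y _; rewrite mulrBr.
move: Ille hpos; rewrite Ej lee_fin hsum; lra.
Qed.
End P6.

Lemma fin_comb (R : realType) (T : eqType) (s : seq T) (Q : T -> R -> Prop) :
  (forall t, t \in s -> exists2 C0, 0 < C0 & forall C, C0 <= C -> Q t C) ->
  exists2 C0, 0 < C0 & forall C, C0 <= C -> forall t, t \in s -> Q t C.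
Proof.
elim: s => [|t s IH] H; first by exists 1 => //.
have [C1 C10 H1] := H t (mem_head _ _).
have [C2 C20 H2] : exists2 C0, 0 < C0 & forall C, C0 <= C -> forall t, t \in s -> Q t C.
  by apply: IH => t' t'in; apply: H; rewrite in_cons t'in orbT.
exists (Num.max C1 C2); first by rewrite lt_max C10.
move=> C; rewrite ge_max => /andP[h1 h2] t'; rewrite in_cons => /orP[/eqP->|t'in].
  exact: H1.
exact: H2.
Qed.

Section P7.
Context (dX : measure_display) (X : measurableType dX) (R : realType) (d n : nat).
Context (Rep : finType) (l : Rep -> label n -> R) (L : 'rV[R]_d -> label n -> R).
Context (psi : 'rV[R]_d -> Rep).
Context (hl0 : forall r y, 0 <= l r y) (hL0 : forall u y, 0 <= L u y).
Context (pc : label n -> seq ('rV[R]_d * R)).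
Context (Hpc1 : forall y u q, q \in pc y -> aff q u <= L u y).
Context (Hpc2 : forall y u, exists2 q, q \in pc y & L u y = aff q u).
Context (x0 : X) (cons : consistent X L psi l).

Lemma fin_L c (u : 'rV[R]_d) : c \in fin pc -> \sum_(y : label n) c.1 y * L u y <= c.2.
Proof.
move=> cin; have /satcsP H := T1 Hpc1 (u := u) (z := L u) (fun y : label n => lexx (L u y)).
by have := H _ cin; rewrite /satc lhs_lz.
Qed.

Lemma gap c r0 r : c \in fin pc ->
  0 < \sum_(y : label n) (- c.1 y) * (l r0 y - l r y) ->
  exists2 del, 0 < del & forall u, psi u = r0 -> del <= c.2 - \sum_(y : label n) c.1 y * L u y.
Proof.
move=> cin hpos.
pose M := fun y : label n => - c.1 y.
have M0 y : 0 <= M y by rewrite /M oppr_ge0; exact: (T3 Hpc1).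
pose s := \sum_y M y.
have s0 : 0 < s.
  rewrite lt_neqAle sumr_ge0 // andbT eq_sym; apply/negP => /eqP.
  move/psumr_eq0P => H0; move: hpos.
  rewrite big1 ?ltxx // => y _; rewrite -/(M y) H0 ?mul0r //.
pose p := fun y => M y / s.
have p0 y : 0 <= p y by rewrite /p divr_ge0 // ltW.
have p1 : \sum_y p y = 1 by rewrite /p -mulr_suml divff // gt_eqF.
have pE (f : label n -> R) : \sum_y p y * f y = (\sum_y M y * f y) / s.
  by rewrite mulr_suml; apply: eq_bigr => y _; rewrite /p mulrAC.
have cE (f : label n -> R) : \sum_(y : label n) c.1 y * f y = - \sum_y M y * f y.
  by rewrite -sumrN; apply: eq_bigr => y _; rewrite /M mulNr opprK.
have hb u : - c.2 / s <= \sum_y p y * L u y.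
  rewrite pE ler_pM2r ?invr_gt0 //; have := fin_L u cin; rewrite cE; lra.
have hpos' : 0 < \sum_y p y * (l r0 y - l r y) by rewrite pE divr_gt0.
have [del del0 Hdel] := calib hl0 hL0 Hpc1 Hpc2 x0 p0 p1 cons hpos' hb.
exists (s * del); first exact: mulr_gt0.
move=> u pu; have := Hdel u pu; rewrite pE cE.
rewrite -(ler_pM2r s0) mulrDl divfK ?gt_eqF // divfK ?gt_eqF // => H.
rewrite mulrC; lra.
Qed.

Lemma sum_split (c : cstr R) (f w : label n -> R) C :
  \sum_(y : label n) c.1 y * (f y - w y / C) =
  \sum_(y : label n) c.1 y * f y - (\sum_(y : label n) c.1 y * w y) / C.
Proof.
rewrite mulr_suml -sumrB; apply: eq_bigr => y _; rewrite mulrBr mulrA //.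
Qed.

Lemma triple c r0 r : c \in fin pc ->
  exists2 C0, 0 < C0 & forall C, C0 <= C -> forall u, psi u = r0 ->
    \sum_(y : label n) c.1 y * (L u y - (l r0 y - l r y) / C) <= c.2.
Proof.
move=> cin.
have cE (f : label n -> R) : \sum_(y : label n) c.1 y * f y = - \sum_(y : label n) (- c.1 y) * f y.
  by rewrite -sumrN; apply: eq_bigr => y _; rewrite mulNr opprK.
set S := \sum_(y : label n) (- c.1 y) * (l r0 y - l r y).
have HL u := fin_L u cin.
case: (leP S 0) => hS.
  exists 1 => // C C1 u pu; rewrite sum_split.
  have C0 : 0 < C by apply: lt_le_trans C1.
  have : 0 <= (\sum_(y : label n) c.1 y * (l r0 y - l r y)) / C.
    by apply: divr_ge0; [rewrite cE -/S oppr_ge0 | exact: ltW].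
  have := HL u; lra.
have [del del0 Hdel] := gap cin hS.
exists (S / del); first by rewrite divr_gt0.
move=> C C1 u pu; rewrite sum_split.
have e : \sum_(y : label n) c.1 y * (l r0 y - l r y) = - S by rewrite cE.
rewrite e mulNr.
have C0 : 0 < C by apply: lt_le_trans C1; rewrite divr_gt0.
have : S / C <= del.
  rewrite ler_pdivrMr // mulrC -ler_pdivrMr //.
have := Hdel u pu; lra.
Qed.

Lemma Cexists : exists2 C, 0 < C & forall u r c, c \in fin pc ->
  \sum_(y : label n) c.1 y * (L u y - (l (psi u) y - l r y) / C) <= c.2.
Proof.
have [C0 C00 H] : exists2 C0, 0 < C0 & forall C, C0 <= C -> forall c, c \in fin pc ->
   forall r0, r0 \in enum Rep -> forall r, r \in enum Rep -> forall u, psi u = r0 ->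
    \sum_(y : label n) c.1 y * (L u y - (l r0 y - l r y) / C) <= c.2.
  apply: fin_comb => c cin; apply: fin_comb => r0 _; apply: fin_comb => r _.
  exact: triple.
exists C0 => // u r c cin.
by apply: (H C0 (lexx _) c cin (psi u) _ r) => //; rewrite mem_enum.
Qed.
End P7.

Section P8.
Context (dT : measure_display) (T : measurableType dT) (R : realType) (D : probability T R).

Lemma int_comb (a b : T -> R) (C : R) : 0 <= C -> (forall q, 0 <= a q) -> (forall q, 0 <= b q) ->
  measurable_fun setT a -> measurable_fun setT b ->
  (\int[D]_q (a q)%:E + C%:E * \int[D]_q (b q)%:E = \int[D]_q ((a q + C * b q)%:E))%E.
Proof.
move=> C0 a0 b0 ma mb.
have mb' : measurable_fun setT (fun q => (b q)%:E) by exact/measurable_EFinP.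
have -> : (\int[D]_q ((a q + C * b q)%:E) = \int[D]_q ((a q)%:E + (C%:E * (b q)%:E)))%E.
  by apply: eq_integral => q _; rewrite EFinD EFinM.
rewrite ge0_integralD //.
- by rewrite ge0_integralZl_EFin // => q _; rewrite lee_fin.
- by move=> q _; rewrite lee_fin.
- exact/measurable_EFinP.
- by move=> q _; rewrite -EFinM lee_fin mulr_ge0.
- by apply/measurable_EFinP; apply: measurable_funM.
Qed.

Lemma int_le_cst (f : T -> R) B : measurable_fun setT f -> (forall q, 0 <= f q) ->
  (forall q, f q <= B) -> (\int[D]_q (f q)%:E <= B%:E)%E.
Proof.
move=> mf f0 fB.
apply: (@le_trans _ _ (\int[D]_q (cst B%:E) q)%E).
  apply: ge0_le_integral => //.
  - by move=> q _; rewrite lee_fin.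
  - exact/measurable_EFinP.
  - by move=> q _; rewrite lee_fin.
rewrite integral_cst //; set X := (X in (_ * X <= _)%E); rewrite (_ : X = 1%E) ?mule1 //; exact: probability_setT.
Qed.
End P8.

Lemma le_sum_nonneg (R : realType) (I : finType) (F : I -> R) i :
  (forall j, 0 <= F j) -> F i <= \sum_j F j.
Proof.
by move=> F0; rewrite (bigD1 i) //= lerDl sumr_ge0.
Qed.

Unset Implicit Arguments. Set Strict Implicit. Set Printing Implicit Defensive.

Theorem theorem7 (dX : measure_display) (X : measurableType dX) (R : realType)
  (d n : nat) (Rep : finType)
  (l : Rep -> label n -> R) (L : 'rV[R]_d -> label n -> R)
  (psi : 'rV[R]_d -> Rep) :
  (forall r y, 0 <= l r y) ->
  (forall u y, 0 <= L u y) ->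
  polyhedral L ->
  meas_link psi ->
  consistent X L psi l ->
  exists c : R, 0 < c /\
    forall (h : X -> 'rV[R]_d) (D : probability (X * label n)%type R),
      meas_rV h ->
      (regretl l D (psi \o h) <= c%:E * regretL L D h)%E.
Proof.
move=> hl0 hL0 HL Hpsi cons.
have [pc [Hpc1 Hpc2]] := pieces_exist HL.
case: (pselect (exists x : X, True)) => [[x0 _]|nX]; last first.
  exists 1; split => // h D _; exfalso.
  have E : [set: X * label n] = set0.
    by apply/seteqP; split => // -[x y] _; apply: nX; exists x.
  have := probability_setT D; rewrite E measure0 => /(congr1 fine) /= /eqP; by rewrite eq_sym oner_eq0.
have [C C0 HC] := Cexists hl0 hL0 Hpc1 Hpc2 x0 cons.
exists C; split => // h D Hh.
pose zf (g : X -> Rep) x := fun y => L (h x) y - (l (psi (h x)) y - l (g x) y) / C.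
pose hg (g : X -> Rep) x := vsel pc (lz (zf g x)).
have F1 g x y : L (hg g x) y <= zf g x y.
  apply: (T2 Hpc2); apply/satcsP => c cin; rewrite /satc lhs_lz; exact: HC.
have F2 g : meas_fin g -> meas_rV (hg g).
  move=> Hg; apply: coord_meas_rV => i.
  rewrite /hg /vsel /vpart; under eq_fun do rewrite mxE.
  apply: (meas_selk (F := fun x => lz (zf g x))) => j.
  rewrite /lz; destruct (insub j) as [y|]; last exact: measurable_cst.
  rewrite /zf; apply: measurable_funB; first exact: (meas_Lh Hpc1 Hpc2 y Hh).
  apply: (@meas_fin_fun _ _ _ _ (fun x => (psi (h x), g x)) (fun ab => (l ab.1 y - l ab.2 y) / C)).
  by apply: meas_fin_pair => //; exact: meas_fin_link.
have F3 g x y : l (psi (h x)) y + C * L (hg g x) y <= l (g x) y + C * L (h x) y.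
  have := F1 g x y; rewrite /zf => H.
  have e : C * ((l (psi (h x)) y - l (g x) y) / C) = l (psi (h x)) y - l (g x) y.
    by rewrite mulrCA divff ?gt_eqF ?mulr1.
  have := ler_pM2l C0 (L (hg g x) y) (L (h x) y - (l (psi (h x)) y - l (g x) y) / C).
  rewrite H mulrBr e => /esym H'; lra.
have mprod : forall FF : X -> label n -> R, (forall y, measurable_fun setT (fun x => FF x y)) ->
    measurable_fun setT (fun q : X * label n => FF q.1 q.2).
  by move=> FF HF; exact: (@meas_prod _ X R n FF HF).
have mLh : measurable_fun setT (fun q : X * label n => L (h q.1) q.2).
  by apply: (mprod (fun x y => L (h x) y)) => y; exact: (meas_Lh Hpc1 Hpc2 y Hh).
have mLg g : meas_fin g -> measurable_fun setT (fun q : X * label n => L (hg g q.1) q.2).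
  by move=> Hg; apply: (mprod (fun x y => L (hg g x) y)) => y; exact: (meas_Lh Hpc1 Hpc2 y (F2 g Hg)).
have mlg g : meas_fin g -> measurable_fun setT (fun q : X * label n => l (g q.1) q.2).
  move=> Hg; apply: (mprod (fun x y => l (g x) y)) => y.
  exact: (@meas_fin_fun _ _ _ _ g (fun r => l r y) Hg).
have Hph : meas_fin (psi \o h) by exact: meas_fin_link.
have F4 g : meas_fin g ->
    (riskl l D (psi \o h) + C%:E * riskL L D (hg g) <= riskl l D g + C%:E * riskL L D h)%E.
  move=> Hg; rewrite /riskl /riskL !int_comb //; try exact: ltW.
  - apply: ge0_le_integral => //.
    + by move=> q _; rewrite lee_fin addr_ge0 // mulr_ge0 // ltW.
    + apply/measurable_EFinP; apply: measurable_funD; first exact: (mlg _ Hph).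
      by apply: measurable_funM => //; exact: mLg.
    + apply/measurable_EFinP; apply: measurable_funD; first exact: (mlg _ Hg).
      by apply: measurable_funM => //.
    + by move=> q _; rewrite lee_fin; exact: F3.
  all: try first [exact: (mlg _ Hph) | exact: (mlg _ Hg) | exact: (mLg _ Hg) | exact: mLh].
pose lmax := \sum_(r : Rep) \sum_(y : label n) l r y.
have lmaxE r y : l r y <= lmax.
  apply: (le_trans (le_sum_nonneg y (hl0 r))).
  by apply: (le_sum_nonneg r (F := fun r => \sum_(y : label n) l r y)) => r'; apply: sumr_ge0.
have riskl_bnd g : meas_fin g -> (0 <= riskl l D g)%E /\ (riskl l D g <= lmax%:E)%E.
  move=> Hg; split; first by rewrite /riskl; apply: integral_ge0 => q _; rewrite lee_fin.
  by apply: int_le_cst => //; exact: mlg.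
have [a Ea] := ereal_bnd (riskl_bnd _ Hph).1 (riskl_bnd _ Hph).2.
have ILge : (0%:E <= ereal_inf [set riskL L D h' | h' in [set h' | meas_rV h']])%E.
  by apply: le_ereal_inf_tmp => _ [h' mh' <-]; rewrite /riskL; apply: integral_ge0 => q _; rewrite lee_fin.
have ILle : (ereal_inf [set riskL L D h' | h' in [set h' | meas_rV h']] <= (\sum_(y : label n) L 0 y)%:E)%E.
  apply: le_trans (ereal_inf_lbound _) _; first by exists (fun _ => 0); [exact: meas_rV_cst|reflexivity].
  apply: int_le_cst => //.
  - exact: (mprod (fun x y => L 0 y) (fun y => measurable_cst _)).
  - by move=> q; exact: (le_sum_nonneg q.2 (hL0 0)).
have [iL EiL] := ereal_bnd ILge ILle.
have Ilge : (0%:E <= ereal_inf [set riskl l D g' | g' in [set g' | meas_fin g']])%E.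
  apply: le_ereal_inf_tmp => _ [g' mg' <-]; exact: (riskl_bnd _ mg').1.
have Ille : (ereal_inf [set riskl l D g' | g' in [set g' | meas_fin g']] <= a%:E)%E.
  by rewrite -Ea; apply: ereal_inf_lbound; exists (psi \o h).
have [il Eil] := ereal_bnd Ilge Ille.
have B0 : (0 <= riskL L D h)%E by rewrite /riskL; apply: integral_ge0 => q _; rewrite lee_fin.
rewrite /regretl /regretL Ea EiL Eil.
case EB: (riskL L D h) B0 => [b| |] // _; last first.
  by rewrite /= gt0_muley ?lte_fin // leey.
have key : ((a + C * iL - C * b)%:E <= il%:E)%E.
  rewrite -Eil; apply: le_ereal_inf_tmp => _ [g Hg <-].
  have [gg Egg] := ereal_bnd (riskl_bnd _ Hg).1 (riskl_bnd _ Hg).2.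
  have H4 := F4 g Hg; rewrite Ea Egg EB in H4.
  have Hlb : (iL%:E <= riskL L D (hg g))%E.
    by rewrite -EiL; apply: ereal_inf_lbound; exists (hg g) => //; exact: F2.
  move: H4 Hlb; case: (riskL L D (hg g)) => [hv| |] //.
  - rewrite -!EFinM -!EFinD !lee_fin => H4 Hlb.
    have : C * iL <= C * hv by rewrite ler_pM2l.
    rewrite Egg lee_fin; lra.
  - by rewrite gt0_muley ?lte_fin // -EFinM -EFinD.
rewrite lee_fin in key.
rewrite -!EFinB -EFinM lee_fin mulrBr; lra.
Qed.
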